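(* If $\mathcal{C}\subset\mathbb{R}_{\ge2}$ is $1$-spaced (i.e. $|\alpha-\beta|\ge1$ for all distinct $\alpha,\beta\in\mathcal{C}$), then \[ \mathop{\sum\sum}_{\alpha,\beta\in\mathcal{C},\ \alpha>\beta} \frac{1}{\alpha\log \alpha} \cdot \frac{1}{\beta\log \beta} \cdot \bigg(\frac{1}{\beta}+\frac{\log \beta}{\alpha/\beta}\bigg) \ll \kappa(\mathcal{C}), \] with an absolute implied constant.
   Context: For $\alpha>0$, $\kappa(\alpha)=\frac1\alpha\prod_{p\le\alpha}(1-\frac1p)$ (product over primes), and $\kappa(\mathcal{C})=\sum_{\alpha\in\mathcal{C}}\kappa(\alpha)$. *)

(* Defs.v *)
From mathcomp Require Import all_boot all_order all_algebra.
From mathcomp Require Import all_classical all_reals all_analysis.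
Set Implicit Arguments. Unset Strict Implicit. Unset Printing Implicit Defensive.
Import Order.TTheory GRing.Theory Num.Theory.
Local Open Scope ring_scope.
Local Open Scope classical_set_scope.

(* kappa(a) = (1/a) * prod_{p prime, p <= a} (1 - 1/p).
   For a >= 0, a prime p satisfies p <= a iff p <= truncn a. *)
Definition kappa (R : realType) (a : R) : R :=
  a^-1 * \prod_(p < (Num.truncn a).+1 | prime p) (1 - (p%:R)^-1).

Definition kappaC (R : realType) (C : set R) : \bar R :=
  \esum_(a in C) (kappa a)%:E.

Definition lhs_term (R : realType) (al be : R) : R :=
  (al * ln al)^-1 * (be * ln be)^-1 * (be^-1 + ln be / (al / be)).

Definition one_spaced (R : realType) (C : set R) : Prop :=
  forall a b, C a -> C b -> a <> b -> 1 <= `|a - b|.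

(* Main.v *)
Require Import Defs.
From mathcomp Require Import all_boot all_order all_algebra.
From mathcomp Require Import all_classical all_reals all_analysis.
From mathcomp Require Import zify ring lra.
Import Order.TTheory GRing.Theory Num.Theory.
Local Open Scope ring_scope.
Local Open Scope classical_set_scope.

Set Implicit Arguments. Unset Strict Implicit. Unset Printing Implicit Defensive.

Section NT.
Local Open Scope nat_scope.

Lemma prod_pp_dvd (s : seq nat) (e : nat -> nat) N :
  uniq s -> all prime s -> (forall p, p \in s -> p ^ e p %| N) ->
  \prod_(p <- s) p ^ e p %| N.
Proof.
elim: s => [|p s IH] /=; first by rewrite big_nil dvd1n.
move=> /andP[pns us] /andP[pp ps] H; rewrite big_cons Gauss_dvd.
  by rewrite H ?mem_head // IH // => q qs; apply: H; rewrite inE qs orbT.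
apply: coprimeXl; rewrite prime_coprime // Euclid_dvd_prod //.
rewrite big_has; apply/hasP => -[q qs].
rewrite Euclid_dvdX // => /andP[]; move/allP: ps => /(_ q qs) qp.
by rewrite dvdn_prime2 // => /eqP pq; move: pns; rewrite pq qs.
Qed.

Lemma sub_prod_dvd (r : seq nat) (P : pred nat) (F : nat -> nat) :
  \prod_(i <- r | P i) F i %| \prod_(i <- r) F i.
Proof.
elim: r => [|a r IH]; first by rewrite !big_nil.
rewrite !big_cons; case: (P a); first by apply: dvdn_mul.
by apply: dvdn_mull.
Qed.

Lemma coprime_prod_l (r : seq nat) (P : pred nat) (F : nat -> nat) n :
  (forall i, i \in r -> P i -> coprime (F i) n) -> coprime (\prod_(i <- r | P i) F i) n.
Proof.
elim: r => [|a r IH] H; first by rewrite big_nil coprime1n.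
rewrite big_cons; case: ifP => Pa.
  by rewrite coprimeMl H ?mem_head // IH // => i ir; apply: H; rewrite inE ir orbT.
by apply: IH => i ir; apply: H; rewrite inE ir orbT.
Qed.

Lemma prime_dvd_fact p m : prime p -> p %| m`! -> p <= m.
Proof.
move=> pp; rewrite fact_prod Euclid_dvd_prod // big_has.
case/hasP => i; rewrite mem_index_iota => /andP[i1 im] pi.
by apply: leq_trans (dvdn_leq i1 pi) _; rewrite -ltnS.
Qed.

Lemma binom_le m : 'C(m.*2.+1, m) <= 4 ^ m.
Proof.
have: 'C(m.*2.+1, m) + 'C(m.*2.+1, m.+1) <= 2 ^ m.*2.+1.
  have -> : 2 ^ m.*2.+1 = \sum_(0 <= i < m.*2.+2) 'C(m.*2.+1, i).
    rewrite -[2]/(1 + 1) expnDn big_mkord; apply: eq_bigr => i _.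
    by rewrite !exp1n !muln1.
  rewrite (@big_cat_nat _ _ _ m 0 m.*2.+2) ; try lia.
  rewrite (@big_cat_nat _ _ _ m.+2 m m.*2.+2) ; try lia.
  have -> : \sum_(m <= i < m.+2) 'C(m.*2.+1, i) = 'C(m.*2.+1, m) + 'C(m.*2.+1, m.+1).
    by rewrite big_nat_recr // big_nat1.
  by rewrite [leqRHS]addnCA leq_addr.
have le1 : m.+1 <= m.*2.+1 by lia.
have e : 'C(m.*2.+1, m.+1) = 'C(m.*2.+1, m).
  by rewrite -(bin_sub le1) subSS -addnn addnK.
move=> h; rewrite e addnn -mul2n expnS leq_pmul2l // -mul2n expnM in h.
by rewrite -mul2n.
Qed.

Definition primorial n := \prod_(0 <= p < n.+1 | prime p) p.

Lemma primorial_S n : primorial n.+1 = primorial n * (if prime n.+1 then n.+1 else 1).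
Proof. by rewrite /primorial big_mkcond big_nat_recr // -big_mkcond. Qed.

Lemma primorial_odd m : 0 < m ->
  primorial m.*2.+1 <= primorial m.+1 * 4 ^ m.
Proof.
move=> m0.
rewrite /primorial (@big_cat_nat _ _ _ m.+2 0 m.*2.+2) ; try lia.
set X := \prod_(m.+2 <= p < m.*2.+2 | prime p) p.
have hX : X %| 'C(m.*2.+1, m).
  have h1 : X %| \prod_(m.+2 <= k < m.*2.+2) k by apply: sub_prod_dvd.
  have h2 : \prod_(m.+2 <= k < m.*2.+2) k = 'C(m.*2.+1, m) * m`!.
    have := fact_split (_ : m.+1 <= m.*2.+1); move=> /(_ ltac:(lia)) hf.
    have := bin_fact (_ : m <= m.*2.+1); move=> /(_ ltac:(lia)).
    have -> : m.*2.+1 - m = m.+1 by lia.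
    move=> hb; apply/eqP; rewrite -(eqn_pmul2l (fact_gt0 m.+1)) -hf -hb.
    by rewrite mulnA [X in X == _]mulnC.
  rewrite h2 in h1; rewrite -(@Gauss_dvdl _ _ m`!) //.
  apply: coprime_prod_l => p; rewrite mem_index_iota => /andP[p1 p2] pp.
  rewrite prime_coprime //; apply/negP => /(prime_dvd_fact pp); lia.
have := dvdn_leq (_ : 0 < 'C(m.*2.+1, m)) hX; rewrite bin_gt0 => /(_ ltac:(lia)) h.
by apply: leq_mul => //; apply: leq_trans h (binom_le m).
Qed.

Lemma primorial_le n : primorial n <= 4 ^ n.
Proof.
elim/ltn_ind: n => n IH.
case: n IH => [|n] IH; first by rewrite /primorial big_mkcond big_nat1.
case: n IH => [|n] IH; first by rewrite primorial_S /primorial big_mkcond big_nat1.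
case: n IH => [|n] IH; first by rewrite primorial_S primorial_S /primorial big_mkcond big_nat1.
case: (boolP (odd n)) => [ho|he].
  have np : prime n.+3 = false.
    apply/negbTE; apply/primePn; right; exists 2; first by lia.
    by rewrite dvdn2 /= !negbK.
  rewrite primorial_S np muln1.
  by apply: leq_trans (IH _ (ltnSn _)) _; rewrite leq_exp2l.
have hm : n.+3 = (n./2.+1).*2.+1.
  by rewrite -[in LHS](odd_double_half n) (negbTE he) doubleS; lia.
rewrite hm; apply: leq_trans (primorial_odd _) _ => //.
rewrite -[4 ^ _.*2.+1](_ : 4 ^ n./2.+2 * 4 ^ n./2.+1 = _); last first.
  by rewrite -expnD; congr (_ ^ _); lia.
apply: leq_mul => //; apply: IH; lia.
Qed.


Lemma fact_le_pow n : n`! <= n ^ n.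
Proof.
have -> : n ^ n = \prod_(1 <= i < n.+1) n by rewrite prod_nat_const_nat subn1.
rewrite fact_prod big_seq [X in _ <= X]big_seq; apply: leq_prod => i.
by rewrite mem_index_iota ltnS => /andP[].
Qed.

Lemma prod_pow_fact n : \prod_(0 <= p < n.+1 | prime p) p ^ (n %/ p) %| n`!.
Proof.
rewrite -big_filter; apply: prod_pp_dvd.
- by rewrite filter_uniq // iota_uniq.
- by apply/allP => p; rewrite mem_filter => /andP[].
move=> p; rewrite mem_filter => /andP[pp _].
rewrite pfactor_dvdn ?fact_gt0 // logn_fact //.
case: n => [|n]; first by rewrite div0n.
by rewrite big_ltn // expn1 leq_addr.
Qed.

Lemma key_nat n : \prod_(0 <= p < n.+1 | prime p) p ^ (n %/ p).+1 <= n ^ n * 4 ^ n.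
Proof.
under eq_bigr do rewrite expnSr.
rewrite big_split /=; apply: leq_mul; last exact: primorial_le.
apply: leq_trans (fact_le_pow n).
by apply: dvdn_leq; [exact: fact_gt0 | exact: prod_pow_fact].
Qed.

End NT.

Section Real.
Variable R : realType.
Local Open Scope ring_scope.

Definition Sp (n : nat) : R := \sum_(0 <= p < n.+1 | prime p) ln (p%:R) / p%:R.
Definition Vp (n : nat) : R := \sum_(0 <= p < n.+1 | prime p) - ln (1 - (p%:R)^-1).

Lemma Sp_S n : Sp n.+1 = Sp n + (if prime n.+1 then ln (n.+1%:R) / n.+1%:R else 0).
Proof. by rewrite /Sp big_mkcond big_nat_recr //= -big_mkcond. Qed.
Lemma Vp_S n : Vp n.+1 = Vp n + (if prime n.+1 then - ln (1 - (n.+1%:R)^-1) else 0).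
Proof. by rewrite /Vp big_mkcond big_nat_recr //= -big_mkcond. Qed.

Lemma Sp_le n : (0 < n)%N -> Sp n <= ln n%:R + ln 4.
Proof.
move=> n0.
have nR : (0 : R) < n%:R by rewrite ltr0n.
have h1 : n%:R * Sp n <= \sum_(0 <= p < n.+1 | prime p) ((n %/ p).+1)%:R * ln (p%:R : R).
  rewrite /Sp mulr_sumr; apply: ler_sum => p pp.
  have p0 : (0 : R) < p%:R by rewrite ltr0n prime_gt0.
  have lp : 0 <= ln (p%:R : R) by apply: ln_ge0; rewrite ler1n prime_gt0.
  rewrite [_ * (_ / _)]mulrC -mulrA [X in _ <= X]mulrC; apply: ler_wpM2l => //.
  rewrite mulrC.
  rewrite ler_pdivrMr // -natrM ler_nat; apply: ltnW; apply: ltn_ceil.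
  exact: prime_gt0.
have h2 : \sum_(0 <= p < n.+1 | prime p) ((n %/ p).+1)%:R * ln (p%:R : R)
          <= n%:R * (ln n%:R + ln 4).
  rewrite -ler_expR expR_sum.
  have -> : n%:R * (ln n%:R + ln 4) = ln (((n ^ n * 4 ^ n)%N)%:R : R).
    rewrite natrM !natrX.
    have q1 : (0:R) < n%:R ^+ n by rewrite exprn_gt0.
    have q2 : (0:R) < 4 ^+ n by rewrite exprn_gt0.
    have q3 : (0:R) < 4 by lra.
    by rewrite lnM ?posrE // !lnXn // mulrDr !mulr_natl.
  have q4 : (0 : R) < (n ^ n * 4 ^ n)%N%:R by rewrite ltr0n muln_gt0 !expn_gt0 n0.
  rewrite lnK ?posrE //.
  apply: le_trans (_ : ((\prod_(0 <= p < n.+1 | prime p) p ^ (n %/ p).+1)%N)%:R <= _).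
    rewrite natr_prod le_eqVlt; apply/orP; left; apply/eqP; apply: eq_bigr => p pp.
    by rewrite expRM_natl lnK ?posrE ?ltr0n ?prime_gt0 // natrX.
  by rewrite ler_nat key_nat.
by have := le_trans h1 h2; rewrite ler_pM2l.
Qed.


Lemma ln_le_sub1 (x : R) : 0 < x -> ln x <= x - 1.
Proof.
move=> x0; have := @le_ln1Dx R (x - 1).
have -> : 1 + (x - 1) = x by ring.
apply; lra.
Qed.

Lemma Vp2 : Vp 2 = ln 2.
Proof.
rewrite !Vp_S /Vp big_mkcond big_nat1 /=.
rewrite !add0r.
have -> : 1 - (2 : R)^-1 = 2^-1 by field.
by rewrite lnV ?posrE // opprK.
Qed.

Lemma Sp2 : Sp 2 = ln 2 / 2.
Proof.
rewrite !Sp_S /Sp big_mkcond big_nat1 /=.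
by rewrite !add0r.
Qed.

Definition Binv n : R := Sp n / ln n%:R + ln (ln n%:R) - ln (ln 2) +
  ln 4 * ((ln 2)^-1 - (ln n%:R)^-1) + (1 - n%:R^-1).

Lemma Vp_inv n : (2 <= n)%N -> Vp n <= Binv n.
Proof.
elim: n => // n IH H2.
have [n1|n2] : n = 1%N \/ (2 <= n)%N by lia.
  subst n; rewrite Vp2 /Binv Sp2.
  have l2 : 0 < ln (2 : R) by apply: ln_gt0; lra.
  have -> : ln (2 : R) / 2 / ln 2 = 2^-1 by field; lra.
  have := @ln_le_sub1 2; lra.
have {}IH := IH n2.
move: IH; rewrite /Binv Vp_S Sp_S.
set N : R := n%:R; set P : R := n.+1%:R; set L := ln (4 : R).
have N2 : 2 <= N by rewrite /N (ler_nat R 2 n).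
have PN : P = N + 1 by rewrite /P -addn1 natrD.
have lN : 0 < ln N by apply: ln_gt0; lra.
have lP : 0 < ln P by apply: ln_gt0; lra.
have lNP : ln N <= ln P by rewrite ler_ln ?posrE; lra.
have uv : (ln P)^-1 <= (ln N)^-1 by rewrite lef_pV2 ?posrE.
have Sa := Sp_le (ltnW n2); rewrite -/N -/L in Sa.
have hA : Sp n * ((ln N)^-1 - (ln P)^-1) <= (ln N + L) * ((ln N)^-1 - (ln P)^-1).
  by apply: ler_wpM2r => //; lra.
have hB : 1 - ln N / ln P <= ln (ln P) - ln (ln N).
  have := @ln_le_sub1 (ln N / ln P) (divr_gt0 lN lP).
  rewrite ln_div ?posrE //; lra.
have e1 : ln N * (ln N)^-1 = 1 by rewrite divff //; lra.
have hC : (if prime n.+1 then - ln (1 - P^-1) else 0) - N^-1 <=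
          (if prime n.+1 then ln P / P else 0) / ln P - P^-1.
  case: ifP => _.
    have -> : ln P / P / ln P = P^-1 by field; lra.
    have -> : 1 - P^-1 = (1 + N^-1)^-1 by rewrite PN; field; lra.
    have Ni : 0 < N^-1 by rewrite invr_gt0; lra.
    have Ni1 : 0 < 1 + N^-1 by lra.
    rewrite lnV ?posrE // opprK.
    have h := @le_ln1Dx R (N^-1) ltac:(lra).
    by rewrite subrr subr_le0.
  rewrite mul0r sub0r add0r lerN2 lef_pV2 ?posrE; lra.
move=> IH.
move: IH hA hB hC e1; clear Sa uv lNP lP lN PN N2.
rewrite /= -/P.
set t := (if _ then - _ else _); set s := (if _ then _ / _ else _).
move: (Sp n) (ln N) ((ln N)^-1) ((ln P)^-1) t s => a x u v t' s'.
move: (ln (ln P)) (ln (ln N)) (ln (ln 2)) ((ln 2)^-1) (P^-1) (N^-1) (Vp n) L.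
move=> y1 y2 y3 y4 y5 y6 V L'.
lra.
Qed.

Definition Bc : R := 2 + 2 * ln 4 / ln 2 - ln (ln 2).

Lemma Vp_le n : (2 <= n)%N -> Vp n <= ln (ln n%:R) + Bc.
Proof.
move=> n2; have := Vp_inv n2; rewrite /Binv /Bc.
have N2 : (2 : R) <= n%:R by rewrite (ler_nat R 2 n).
have l2 : 0 < ln (2 : R) by apply: ln_gt0; lra.
have lN : 0 < ln (n%:R : R) by apply: ln_gt0; lra.
have l4 : 0 <= ln (4 : R) by apply: ln_ge0; lra.
have l2N : ln (2 : R) <= ln n%:R by rewrite ler_ln ?posrE; lra.
have uv : (ln (n%:R : R))^-1 <= (ln 2)^-1 by rewrite lef_pV2 ?posrE.
have Sa := Sp_le (ltnW n2).
have h1 : Sp n / ln n%:R <= 1 + ln 4 * (ln 2)^-1.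
  have e1 : Sp n / ln n%:R <= (ln n%:R + ln 4) / ln n%:R.
    by apply: ler_wpM2r => //; rewrite invr_ge0; lra.
  have e2 : (ln (n%:R : R) + ln 4) / ln n%:R = 1 + ln 4 * (ln n%:R)^-1.
    by field; lra.
  have e3 : ln 4 * (ln (n%:R : R))^-1 <= ln 4 * (ln 2)^-1 by apply: ler_wpM2l.
  lra.
have h2 : 0 <= ln 4 * (ln (n%:R : R))^-1 by apply: mulr_ge0 => //; rewrite invr_ge0; lra.
have h3 : 0 <= (n%:R : R)^-1 by rewrite invr_ge0; lra.
move: h1 h2 h3; rewrite mulrBr -(mulrA 2).
move: (Sp n / ln n%:R) (ln 4 * (ln (n%:R : R))^-1) ((n%:R : R)^-1) (ln 4 * (ln (2 : R))^-1).
move=> a b c d; lra.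
Qed.

Lemma prodP n : \prod_(p < n.+1 | prime p) (1 - ((p : nat)%:R : R)^-1) = expR (- Vp n).
Proof.
rewrite /Vp -sumrN expR_sum big_mkord; apply: eq_bigr => p pp.
rewrite opprK lnK // posrE subr_gt0 invf_lt1 ?ltr1n ?prime_gt1 //.
by rewrite ltr0n prime_gt0.
Qed.

Lemma kappa_lb (a : R) : 2 <= a -> (a * ln a)^-1 <= expR Bc * kappa a.
Proof.
move=> a2; rewrite /kappa prodP.
set n := Num.truncn a.
have n2 : (2 <= n)%N by rewrite /n truncn_ge_nat //; lra.
have na : (n%:R : R) <= a by rewrite /n truncn_le; lra.
have N2 : (2 : R) <= n%:R by rewrite (ler_nat R 2 n).
have lN : 0 < ln (n%:R : R) by apply: ln_gt0; lra.
have lNa : ln (n%:R : R) <= ln a by rewrite ler_ln ?posrE; lra.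
have hV := Vp_le n2.
have : expR (- (ln (ln n%:R) + Bc)) <= expR (- Vp n) by rewrite ler_expR lerN2.
rewrite opprD expRD (expRN (ln (ln n%:R))) (expRN Bc) lnK ?posrE // => h.
have a0 : 0 < a by lra.
have hy : (ln a)^-1 <= (ln (n%:R : R))^-1.
  by rewrite lef_pV2 ?posrE //; apply: ln_gt0; lra.
have hx : (ln (n%:R : R))^-1 <= expR (- Vp n) * expR Bc.
  by rewrite -ler_pdivrMr ?expR_gt0.
rewrite invfM mulrCA; apply: ler_wpM2l; first by rewrite invr_ge0; lra.
by apply: le_trans hy _; rewrite mulrC.
Qed.

End Real.

Section Main.
Variable R : realType.
Local Open Scope ring_scope.
Local Open Scope classical_set_scope.

Lemma esum_subset (T : choiceType) (A B : set T) (f : T -> \bar R) :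
  A `<=` B -> (forall x, B x -> (0 <= f x)%E) ->
  (\esum_(x in A) f x <= \esum_(x in B) f x)%E.
Proof.
move=> AB f0; apply: ge_ereal_sup => _ [X [finX XA] <-].
by apply: esum_ge; exists X => //; split => //; apply: subset_trans XA AB.
Qed.

Lemma tele m : \sum_(2 <= k < m.+2) (((k%:R : R) - 1)^-1 - (k%:R)^-1) = 1 - (m.+1%:R)^-1.
Proof.
elim: m => [|m IH]; first by rewrite big_geq // invr1 subrr.
rewrite big_nat_recr //= IH.
have -> : (m.+2%:R : R) - 1 = m.+1%:R by rewrite -addn1 natrD addrK.
by rewrite addrA subrK.
Qed.

Lemma tele_le M : \sum_(2 <= k < M) (((k%:R : R) - 1)^-1 - (k%:R)^-1) <= 1.
Proof.
case: M => [|[|m]]; try by rewrite big_geq.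
by rewrite tele lerBlDr lerDl invr_ge0 ler0n.
Qed.

Lemma kappa_scale (C : set R) (K : R) : 0 <= K ->
  (\esum_(a in C) (K * kappa a)%:E <= K%:E * kappaC C)%E.
Proof.
move=> K0; apply: ge_ereal_sup => _ [X [finX XC] <-].
rewrite fsumEFin // -mulr_fsumr EFinM -fsumEFin //.
apply: lee_wpmul2l; first by rewrite lee_fin.
by apply: ereal_sup_ubound; exists X.
Qed.


Lemma inner (C : set R) (al : R) : (forall a, C a -> 2 <= a) -> one_spaced C -> C al ->
  (\esum_(be in [set be | C be /\ (be < al)%R]) (lhs_term al be)%:E
     <= ((al * ln al)^-1 * ((ln 2)^-1 + 1))%R%:E)%E.
Proof.
move=> C2 sp Cal; have a2 := C2 _ Cal.
set J := [set be | C be /\ be < al].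
have la : 0 < ln al by apply: ln_gt0; lra.
have l2 : 0 < ln (2 : R) by apply: ln_gt0; lra.
have l2i : 0 <= (ln (2 : R))^-1 by rewrite invr_ge0; lra.
set c := (al * ln al)^-1.
have c0 : 0 <= c by rewrite invr_ge0; apply: mulr_ge0; lra.
set M := Num.truncn al.
pose g (k : nat) : R := c * ((ln 2)^-1 * (((k%:R : R) - 1)^-1 - (k%:R)^-1) + al^-1).
have Jp : forall be, J be -> [/\ 2 <= be, be + 1 <= al & C be].
  move=> be [Cbe lt]; split => //; first exact: C2.
  have ne : al <> be by move=> e; rewrite e ltxx in lt.
  have := sp _ _ Cal Cbe ne; rewrite ger0_norm; lra.
have step1 : (\esum_(be in J) (lhs_term al be)%:E <=
               \esum_(be in J) (g (Num.truncn be))%:E)%E.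
  apply: le_esum => be /Jp [b2 ba Cb]; rewrite lee_fin.
  set k := Num.truncn be.
  have k2 : (2 <= k)%N by rewrite /k truncn_ge_nat //; lra.
  have kb : (k%:R : R) <= be by rewrite /k truncn_le; lra.
  have K2 : (2 : R) <= k%:R by rewrite (ler_nat R 2 k).
  have lb : 0 < ln be by apply: ln_gt0; lra.
  have -> : lhs_term al be = c * ((be ^+ 2 * ln be)^-1 + al^-1).
    rewrite /lhs_term /c; field.
    have al0 : 0 < al by lra.
    have be0 : 0 < be by lra.
    by rewrite (gt_eqF al0) (gt_eqF lb) (gt_eqF be0) (gt_eqF la).
  change (c * ((be ^+ 2 * ln be)^-1 + al^-1) <=
          c * ((ln 2)^-1 * (((k%:R : R) - 1)^-1 - (k%:R)^-1) + al^-1)).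
  apply: ler_wpM2l => //; rewrite lerD2r.
  have -> : ((k%:R : R) - 1)^-1 - (k%:R)^-1 = (k%:R * (k%:R - 1))^-1.
    by field; apply/andP; split; apply/eqP; lra.
  rewrite invfM mulrC; apply: ler_pM.
  - by rewrite invr_ge0; lra.
  - by rewrite invr_ge0; nra.
  - by rewrite lef_pV2 ?posrE ?ler_ln ?posrE; lra.
  - by rewrite lef_pV2 ?posrE; nra.
apply: le_trans step1 _.
have inj : set_inj J (fun be => Num.truncn be).
  move=> b1 b2; rewrite !inE => /Jp [b12 _ C1] /Jp [b22 _ C2'] e.
  apply: contrapT => ne.
  have := sp _ _ C1 C2' ne.
  have := truncn_itv (_ : 0 <= b1); have := truncn_itv (_ : 0 <= b2).
  rewrite -e => /(_ ltac:(lra)) /andP[h1 h2] /(_ ltac:(lra)) /andP[h3 h4].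
  rewrite ler_normr; case/orP; lra.
rewrite -(esum_image J (fun be => Num.truncn be) (fun k => (g k)%:E) inj).
set s := index_iota 2 M.
apply: le_trans (esum_subset (B := [set` s]) _ _) _.
- move=> _ [be /Jp [b2 ba Cb] <-]; rewrite /= /s mem_index_iota.
  apply/andP; split; first by rewrite truncn_ge_nat //; lra.
  rewrite /M truncn_gt_nat.
  have : ((Num.truncn be)%:R : R) <= be by rewrite truncn_le; lra.
  rewrite -natr1; lra.
- move=> k; rewrite /= /s mem_index_iota => /andP[k2 _]; rewrite lee_fin.
  have K2 : (2 : R) <= k%:R by rewrite (ler_nat R 2 k).
  apply: mulr_ge0 => //; apply: addr_ge0; last by rewrite invr_ge0; lra.
  apply: mulr_ge0 => //; rewrite subr_ge0 lef_pV2 ?posrE; lra.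
rewrite esum_fset; last 2 first.
- exact: finite_seq.
- move=> k; rewrite inE /= /s mem_index_iota => /andP[k2 _]; rewrite lee_fin.
  have K2 : (2 : R) <= k%:R by rewrite (ler_nat R 2 k).
  apply: mulr_ge0 => //; apply: addr_ge0; last by rewrite invr_ge0; lra.
  apply: mulr_ge0 => //; rewrite subr_ge0 lef_pV2 ?posrE; lra.
rewrite -fsbig_seq ?iota_uniq // sumEFin lee_fin.
rewrite /g -mulr_sumr big_split /= -mulr_sumr sumr_const_nat.
apply: ler_wpM2l => //; apply: lerD.
  by rewrite -[X in _ <= X]mulr1; apply: ler_wpM2l => //; apply: tele_le.
rewrite -mulr_natl ler_pdivrMr; last lra.
rewrite mul1r; apply: le_trans (_ : (M%:R : R) <= al).
  by rewrite ler_nat leq_subr.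
by rewrite /M truncn_le; lra.
Qed.

End Main.

Unset Implicit Arguments.

Theorem lemma2p14 (R : realType) :
  exists K : R, 0 < K /\
  forall C : set R,
    (forall a, C a -> 2 <= a) ->
    one_spaced C ->
    (\esum_(ab in [set ab : R * R | C ab.1 /\ C ab.2 /\ (ab.2 < ab.1)%R])
        (lhs_term ab.1 ab.2)%:E <= K%:E * kappaC C)%E.
Proof.
have l2 : 0 < ln (2 : R) by apply: ln_gt0; lra.
have l2i : 0 < (ln (2 : R))^-1 by rewrite invr_gt0.
exists (((ln (2 : R))^-1 + 1) * expR (Bc R)); split.
  by apply: mulr_gt0; [lra | exact: expR_gt0].
move=> C C2 sp.
rewrite -(@esum_esum R _ _ C (fun a => [set be | C be /\ (be < a)%R])
            (fun a b => (lhs_term a b)%:E)); last first.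
  move=> a b Ca [Cb ba]; rewrite lee_fin.
  have a2 := C2 _ Ca; have b2 := C2 _ Cb.
  have la : 0 <= ln a by apply: ln_ge0; lra.
  have lb : 0 <= ln b by apply: ln_ge0; lra.
  rewrite /lhs_term; apply: mulr_ge0; first apply: mulr_ge0.
  - by rewrite invr_ge0; apply: mulr_ge0 => //; lra.
  - by rewrite invr_ge0; apply: mulr_ge0 => //; lra.
  - apply: addr_ge0; first by rewrite invr_ge0; lra.
    by apply: divr_ge0 => //; apply: divr_ge0; lra.
apply: le_trans (kappa_scale C _); last first.
  by apply: mulr_ge0; [lra | exact: expR_ge0].
apply: le_esum => a Ca; apply: le_trans (inner C2 sp Ca) _.
rewrite lee_fin -mulrA [X in X <= _]mulrC; apply: ler_wpM2l; first lra.
exact: kappa_lb (C2 _ Ca).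
Qed.
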